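(* $\mathbb E\big[\widetilde V^{\textsc{off}}_1[\omega_1]\big]\le\mathbb E\big[V^{\textsc{off}}[\omega]\big]+O\big(K^{3/2}\sqrt T\big)$.
   Context: Model. There are $m$ resources and $n$ arrival types; type $j$ has cost vector $c_j\in\mathbb R^m$ and allowed resources $\mathcal S_j\subseteq[m]$, $\max_{i,j}|c_{ji}|<\infty$. The horizon has $T$ periods partitioned into $K=\Theta(1)$ epochs ($T$ a multiple of $K$), epoch $k$ being periods $(k-1)T/K+1,\dots,kT/K$. In period $t$ one arrival of type $j^t$ occurs, $j^1,\dots,j^T$ i.i.d. with $\mathbb P(j^t=j)=p_j$, $p$ not depending on $T$; $\omega=(j^t)_{t\le T}$, $\omega_1=(j^t)_{t\le T/K}$, $\Lambda_j(t_1:t_2)=\sum_{t_1<\tau\le t_2}\mathbf 1\{j^\tau=j\}$. Each epoch $k$ and resource $i$ has a target $\rho_{ki}\in[0,1]$ and a convex $L$-Lipschitz $g_{ki}:[0,1]\to\mathbb R_{\ge0}$ with $g_{ki}(\rho_{ki})=0$. $O(\cdot)$ is as $T\to\infty$ with hidden constants depending only on $m,n,c,L,p$. Offline benchmark: $V^{\textsc{off}}[\omega]$ is the minimum over nonnegative integers $Z_{ji}(kT/K)$ ($Z_{ji}(0)=0$; write $Z(t_1:t_2)=Z(t_2)-Z(t_1)$, $Z_i=\sum_jZ_{ji}$) subject to $\sum_iZ_{ji}((k-1)T/K:kT/K)\le\Lambda_j((k-1)T/K:kT/K)$ for all $j,k$ and $Z_{ji}(T)=0$ for $i\notin\mathcal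 S_j$, of $\sum_{j,i}c_{ji}Z_{ji}(T)+\frac TK\sum_k\sum_ik\,g_{ki}\big(Z_i(kT/K)/(kT/K)\big)$. Proxy offline optimum for epoch 1: $\widetilde V^{\textsc{off}}_1[\omega_1]$ is the minimum over nonnegative integers $Z^{(k)}_{ji}$ ($j\in[n],i\in[m],k\in[K]$) with $Z^{(k)}_{ji}=0$ for $i\notin\mathcal S_j$ and $\sum_iZ^{(k)}_{ji}\le\Lambda_j(0:T/K)$ for all $j,k$, of $$\sum_{j,i}c_{ji}\sum_{k}Z^{(k)}_{ji}+\frac TK\sum_{k\in[K]}\sum_ik\,g_{ki}\Big(\frac{\sum_j\sum_{k''=1}^{k}Z^{(k'')}_{ji}}{kT/K}\Big),$$ i.e. the offline problem in which every epoch is assumed to have the same arrival counts as epoch 1. *)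

(* Defs.v *)
From HB Require Import structures.
From mathcomp Require Import all_boot all_order all_algebra.
From mathcomp Require Import all_classical all_reals.

Set Implicit Arguments.
Unset Strict Implicit.
Unset Printing Implicit Defensive.

Import Order.TTheory GRing.Theory Num.Theory.
Local Open Scope ring_scope.
Local Open Scope classical_set_scope.

Section OfflineModel.
Variables (R : realType) (m n K : nat).
Variables (c : 'I_n -> 'I_m -> R) (S : 'I_n -> 'I_m -> bool).
Variable (g : 'I_K -> 'I_m -> R -> R).

(* Lambda_j(t1:t2) = #{tau : t1 < tau <= t2, j^tau = j}; periods are 1-based
   in the paper, here the sample path w is indexed by 0-based periods
   tau' = tau - 1, so the condition reads t1 <= tau' < t2. *)
Definition Lambda (T : nat) (w : {ffun 'I_T -> 'I_n}) (j : 'I_n) (t1 t2 : nat) : nat :=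
  #|[set tau : 'I_T | (t1 <= tau < t2)%N && (w tau == j)]|.

(* An allocation X k j i (k 0-based epoch index, i.e. paper epoch k+1) is a
   nonnegative integer; for the offline problem it is the increment
   Z_{ji}(kT/K : (k+1)T/K), for the proxy problem it is Z^{(k+1)}_{ji}. *)
Definition alloc := 'I_K -> 'I_n -> 'I_m -> nat.

Definition Zcum (X : alloc) (j : 'I_n) (i : 'I_m) (k : nat) : nat :=
  (\sum_(kk < K | (kk < k)%N) X kk j i)%N.

Definition objective (ep : nat) (X : alloc) : R :=
  \sum_(j < n) \sum_(i < m) c j i * (Zcum X j i K)%:R
  + ep%:R * \sum_(k < K) \sum_(i < m)
      (k.+1)%:R * g k i ((\sum_(j < n) Zcum X j i k.+1)%:R / (k.+1 * ep)%:R).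

Definition feasible_off (T ep : nat) (w : {ffun 'I_T -> 'I_n}) (X : alloc) : Prop :=
  (forall (k : 'I_K) (j : 'I_n),
      (\sum_(i < m) X k j i <= Lambda w j (k * ep) (k.+1 * ep))%N) /\
  (forall (j : 'I_n) (i : 'I_m), ~~ S j i -> Zcum X j i K = 0%N).

Definition feasible_proxy (T ep : nat) (w : {ffun 'I_T -> 'I_n}) (X : alloc) : Prop :=
  (forall (k : 'I_K) (j : 'I_n) (i : 'I_m), ~~ S j i -> X k j i = 0%N) /\
  (forall (k : 'I_K) (j : 'I_n), (\sum_(i < m) X k j i <= Lambda w j 0 ep)%N).

(* V^off[omega] : minimum (= infimum over the finite nonempty feasible set) *)
Definition Voff (T : nat) (w : {ffun 'I_T -> 'I_n}) : R :=
  inf [set objective (T %/ K) X | X in feasible_off (T %/ K) w].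

(* tilde V^off_1[omega_1]: depends on w only through its first epoch *)
Definition Vproxy1 (T : nat) (w : {ffun 'I_T -> 'I_n}) : R :=
  inf [set objective (T %/ K) X | X in feasible_proxy (T %/ K) w].

End OfflineModel.

(* i.i.d. arrivals with law p : expectation over sample paths of length T *)
Definition expect (R : realType) (n T : nat) (p : 'I_n -> R)
  (f : {ffun 'I_T -> 'I_n} -> R) : R :=
  \sum_(w : {ffun 'I_T -> 'I_n}) (\prod_(t < T) p (w t)) * f w.

Definition convex_on01 (R : realType) (f : R -> R) : Prop :=
  forall x y t : R, 0 <= x <= 1 -> 0 <= y <= 1 -> 0 <= t <= 1 ->
    f (t * x + (1 - t) * y) <= t * f x + (1 - t) * f y.

Definition lipschitz_on01 (R : realType) (L : R) (f : R -> R) : Prop :=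
  forall x y : R, 0 <= x <= 1 -> 0 <= y <= 1 -> `|f x - f y| <= L * `|x - y|.

(* Main.v *)
Require Import Defs.
From HB Require Import structures.
From mathcomp Require Import all_boot all_order all_algebra.
From mathcomp Require Import all_classical all_reals.
From mathcomp Require Import zify ring lra.
Import Order.TTheory GRing.Theory Num.Theory.
Local Open Scope ring_scope.

Lemma sum_nat_zero (lo hi : nat) (F : nat -> nat) :
  (forall i, (lo <= i < hi)%N -> F i = 0%N) -> (\sum_(lo <= i < hi) F i)%N = 0%N.
Proof.
move=> H; rewrite (eq_big_nat _ _ (F2 := fun _ => 0%N)) //.
by rewrite sum_nat_const_nat muln0.
Qed.

Lemma count_int N a b : (b <= N)%N ->
  (\sum_(t < N) ((a <= t < b)%N : nat))%N = (b - a)%N.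
Proof.
move=> bN.
rewrite -(big_mkord xpredT (fun t => nat_of_bool (a <= t < b)%N)).
rewrite (big_cat_nat _ (n:=b)) //=.
rewrite [X in (_ + X)%N]sum_nat_zero ?addn0; last first.
  move=> i /andP[bi _].
  by have -> : (a <= i < b)%N = false by apply/negbTE; rewrite negb_and -leqNgt bi orbT.
case: (leqP a b) => ab.
  rewrite (big_cat_nat _ (n:=a)) //=.
  rewrite sum_nat_zero ?add0n; last first.
    move=> i /andP[_ ia].
    by have -> : (a <= i < b)%N = false by apply/negbTE; rewrite negb_and -ltnNge ia.
  rewrite (eq_big_nat _ _ (F2 := fun _ => 1%N)); last by move=> i ->.
  by rewrite sum_nat_const_nat muln1.
rewrite sum_nat_zero; last first.
  move=> i /andP[_ ib].
  have -> : (a <= i < b)%N = false by apply/negbTE; rewrite negb_and -ltnNge (ltn_trans ib ab).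
  by [].
by apply/esym/eqP; rewrite subn_eq0 ltnW.
Qed.

Lemma Lambda_sum (n T : nat) (w : {ffun 'I_T -> 'I_n}) j a b :
  Lambda w j a b = (\sum_(t < T) (((a <= t < b)%N && (w t == j)) : nat))%N.
Proof.
rewrite /Lambda -sum1_card big_mkcond /=; apply: eq_bigr => t _.
case: ifP => [/set_mem -> //|H].
case E: (_ && _) => //.
by rewrite mem_set in H.
Qed.

Lemma sum_eqj (n : nat) (x : 'I_n) (P : bool) :
  (\sum_(j < n) ((P && (x == j)) : nat))%N = P.
Proof.
case: P => /=; last by rewrite big1.
rewrite (bigD1 x) //= eqxx big1 ?addn0 // => i; by rewrite eq_sym => /negbTE ->.
Qed.

Lemma Lambda_sumj (n T : nat) (w : {ffun 'I_T -> 'I_n}) a b : (b <= T)%N ->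
  (\sum_(j < n) Lambda w j a b = b - a)%N.
Proof.
move=> bT.
under eq_bigr do rewrite Lambda_sum.
rewrite exchange_big /=.
under eq_bigr do rewrite sum_eqj.
exact: count_int.
Qed.

Lemma zcum_bound (m n K : nat) (X : alloc m n K) (B : 'I_K -> 'I_n -> nat) ep k1 :
  (forall kk j, \sum_(i < m) X kk j i <= B kk j)%N ->
  (forall kk, \sum_(j < n) B kk j <= ep)%N -> (k1 <= K)%N ->
  (\sum_(j < n) \sum_(i < m) Zcum X j i k1 <= k1 * ep)%N.
Proof.
move=> HX HB k1K.
rewrite /Zcum.
under eq_bigr do rewrite exchange_big /=.
rewrite exchange_big /=.
apply: (@leq_trans (\sum_(kk < K | (kk < k1)%N) ep)%N).
  apply: leq_sum => kk _.
  apply: leq_trans (HB kk).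
  by apply: leq_sum => j _.
rewrite big_mkcond /=.
have E : forall kk : 'I_K, ((if (kk < k1) then ep else 0) = ((0 <= kk < k1) : nat) * ep)%N.
  by move=> kk; case: (kk < k1)%N; rewrite /= ?mul1n ?mul0n.
rewrite (eq_bigr _ (fun kk _ => E kk)).
by rewrite -big_distrl /= (@count_int K 0 k1 k1K) subn0.
Qed.

Lemma greedy_sum m (F : 'I_m -> nat) b :
  (\sum_(i < m) minn (F i) (b - \sum_(i' < m | (i' < i)%N) F i')
     = minn (\sum_(i < m) F i) b)%N.
Proof.
elim: m F => [|m IH] F; first by rewrite !big_ord0 min0n.
have inner : forall i0 : 'I_m.+1, (i0 <= m)%N ->
  (\sum_(i' < m.+1 | (i' < i0)%N) F i' =
   \sum_(i' < m | (i' < i0)%N) F (widen_ord (leqnSn m) i'))%N.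
  move=> i0 i0m; rewrite big_mkcond big_ord_recr /= ltnNge i0m /= addn0.
  by rewrite -big_mkcond.
rewrite !big_ord_recr /=.
rewrite (inner ord_max) //=.
under eq_bigr => i _ do rewrite (inner (widen_ord (leqnSn m) i) (ltnW (ltn_ord i))).
rewrite (IH (fun i => F (widen_ord (leqnSn m) i))).
have -> : (\sum_(i' < m | (i' < m)%N) F (widen_ord (leqnSn m) i') =
           \sum_(i' < m) F (widen_ord (leqnSn m) i'))%N.
  by apply: eq_bigl => i; rewrite ltn_ord.
set S := (\sum_(i < m) _)%N.
lia.
Qed.

Section Obj.
Variables (R : realType) (m n K : nat) (c : 'I_n -> 'I_m -> R) (L : R)
  (g : 'I_K -> 'I_m -> R -> R).
Hypothesis L0 : 0 <= L.
Hypothesis Hlip : forall k i, lipschitz_on01 L (g k i).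
Hypothesis Hg0 : forall k i x, 0 <= x <= 1 -> 0 <= g k i x.

Definition cmax : R := \sum_(j < n) \sum_(i < m) `|c j i|.

Lemma cmax_ge0 : 0 <= cmax.
Proof. by apply: sumr_ge0 => j _; apply: sumr_ge0 => i _. Qed.

Lemma c_le_cmax j i : `|c j i| <= cmax.
Proof.
rewrite /cmax (bigD1 j) //= (bigD1 i) //= -addrA lerDl.
apply: addr_ge0; first by apply: sumr_ge0.
by apply: sumr_ge0 => j' _; apply: sumr_ge0.
Qed.

Definition zbound (X : alloc m n K) ep :=
  forall k1, (k1 <= K)%N ->
    (\sum_(j < n) \sum_(i < m) Zcum X j i k1 <= k1 * ep)%N.

Lemma arg01 (X : alloc m n K) ep (k : 'I_K) i : (0 < ep)%N -> zbound X ep ->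
  0 <= ((\sum_(j < n) Zcum X j i k.+1)%:R / (k.+1 * ep)%:R : R) <= 1.
Proof.
move=> ep0 Hb; apply/andP; split.
  by apply: divr_ge0; apply: ler0n.
have Np : 0 < (k.+1 * ep)%:R :> R by rewrite ltr0n muln_gt0.
rewrite ler_pdivrMr // mul1r ler_nat.
apply: leq_trans (Hb k.+1 (ltn_ord k)).
by apply: leq_sum => j _; rewrite (bigD1 i) //= leq_addr.
Qed.

Lemma obj_lb (X : alloc m n K) ep : (0 < ep)%N -> zbound X ep ->
  - (cmax * (K * ep)%:R) <= objective c g ep X.
Proof.
move=> ep0 Hb; rewrite /objective.
apply: (@le_trans _ _ (\sum_(j < n) \sum_(i < m) c j i * (Zcum X j i K)%:R + 0)); last first.
  rewrite lerD2l; apply: mulr_ge0; first by apply: ler0n.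
  apply: sumr_ge0 => k _; apply: sumr_ge0 => i _; apply: mulr_ge0; first by apply: ler0n.
  by apply: Hg0; apply: arg01.
rewrite addr0.
apply: (@le_trans _ _ (\sum_(j < n) \sum_(i < m) - (cmax * (Zcum X j i K)%:R))); last first.
  apply: ler_sum => j _; apply: ler_sum => i _.
  apply: (@le_trans _ _ (- (`|c j i| * (Zcum X j i K)%:R))).
    by rewrite lerN2; apply: ler_wpM2r; [apply: ler0n | apply: c_le_cmax].
  rewrite -mulNr; apply: ler_wpM2r; first by apply: ler0n.
  by rewrite lerNl -normrN ler_norm.
under eq_bigr do rewrite sumrN -mulr_sumr.
rewrite sumrN -mulr_sumr lerN2; apply: ler_wpM2l; first exact: cmax_ge0.
under eq_bigr do rewrite -natr_sum.
rewrite -natr_sum ler_nat.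
exact: Hb.
Qed.


Lemma Zcum_le (X Y : alloc m n K) j i k1 : (forall k j i, (Y k j i <= X k j i)%N) ->
  (Zcum Y j i k1 <= Zcum X j i k1)%N.
Proof. by move=> H; apply: leq_sum => kk _; apply: H. Qed.

Lemma zbound_le (X Y : alloc m n K) ep : (forall k j i, (Y k j i <= X k j i)%N) ->
  zbound X ep -> zbound Y ep.
Proof.
move=> H Hb k1 k1K; apply: leq_trans (Hb k1 k1K).
by apply: leq_sum => j _; apply: leq_sum => i _; apply: Zcum_le.
Qed.

Lemma zcum_diff_le (X Y : alloc m n K) j i k1 : (forall k j i, (Y k j i <= X k j i)%N) ->
  (Zcum X j i k1)%:R - (Zcum Y j i k1)%:R <= (Zcum X j i K)%:R - (Zcum Y j i K)%:R :> R.
Proof.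
move=> H; rewrite /Zcum !natr_sum -!sumrB.
rewrite [X in X <= _]big_mkcond [X in _ <= X]big_mkcond /=.
apply: ler_sum => kk _; rewrite ltn_ord.
case: (kk < k1)%N => //.
by rewrite subr_ge0 ler_nat H.
Qed.

Lemma obj_diff (X Y : alloc m n K) ep : (0 < ep)%N -> zbound X ep ->
  (forall k j i, (Y k j i <= X k j i)%N) ->
  objective c g ep Y <= objective c g ep X + (cmax + K%:R * L) *
    \sum_(j < n) \sum_(i < m) ((Zcum X j i K)%:R - (Zcum Y j i K)%:R).
Proof.
move=> ep0 HbX HYX.
have HbY := @zbound_le X Y ep HYX HbX.
set d := fun j i => ((Zcum X j i K)%:R - (Zcum Y j i K)%:R : R).
have d0 : forall j i, 0 <= d j i.
  by move=> j i; rewrite /d subr_ge0 ler_nat; apply: Zcum_le.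
rewrite /objective.
set AY := \sum_(j < n) _.
set AX := \sum_(j < n) \sum_(i < m) c j i * (Zcum X j i K)%:R.
set GY := \sum_(k < K) \sum_(i < m) _ * g k i ((\sum_(j < n) Zcum Y j i k.+1)%:R / _).
set GX := \sum_(k < K) \sum_(i < m) _ * g k i ((\sum_(j < n) Zcum X j i k.+1)%:R / _).
set D := \sum_(j < n) \sum_(i < m) d j i.
have h1 : AY <= AX + cmax * D.
  rewrite /D mulr_sumr; under eq_bigr do rewrite mulr_sumr.
  rewrite /AY /AX -big_split /=; apply: ler_sum => j _.
  rewrite -big_split /=; apply: ler_sum => i _.
  have e : c j i * (Zcum Y j i K)%:R = c j i * (Zcum X j i K)%:R + (- c j i) * d j i.
    by rewrite /d; ring.
  rewrite e lerD2l; apply: ler_wpM2r; first exact: d0.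
  apply: le_trans (c_le_cmax j i).
  by rewrite -normrN ler_norm.
have h2 : ep%:R * GY <= ep%:R * GX + K%:R * L * D.
  have -> : K%:R * L * D = \sum_(k < K) \sum_(i < m) L * \sum_(j < n) d j i.
    under eq_bigr do rewrite -mulr_sumr exchange_big /=.
    by rewrite sumr_const card_ord -[RHS]mulr_natl /D; ring.
  rewrite /GY /GX !mulr_sumr -big_split /=; apply: ler_sum => k _.
  rewrite !mulr_sumr -big_split /=; apply: ler_sum => i _.
  set SY := (\sum_(j < n) Zcum Y j i k.+1)%:R : R.
  set SX := (\sum_(j < n) Zcum X j i k.+1)%:R : R.
  set N := (k.+1 * ep)%:R : R.
  have Np : 0 < N by rewrite /N ltr0n muln_gt0.
  have lipt := Hlip k i _ _ (arg01 _ _ k i ep0 HbY) (arg01 _ _ k i ep0 HbX).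
  have SYX : SY <= SX.
    by rewrite /SY /SX ler_nat; apply: leq_sum => j _; apply: Zcum_le.
  have ea : `|SY / N - SX / N| = (SX - SY) / N.
    rewrite -mulrBl -normrN -mulNr opprB ger0_norm //.
    by apply: divr_ge0; [rewrite subr_ge0 | apply: ltW].
  rewrite ea in lipt.
  have h : ep%:R * (k.+1%:R * g k i (SY / N)) - ep%:R * (k.+1%:R * g k i (SX / N))
            <= L * (SX - SY).
    have -> : ep%:R * (k.+1%:R * g k i (SY / N)) - ep%:R * (k.+1%:R * g k i (SX / N))
       = N * (g k i (SY / N) - g k i (SX / N)) by rewrite /N natrM; ring.
    apply: (@le_trans _ _ (N * (L * ((SX - SY) / N)))).
      apply: ler_wpM2l; first exact: ltW.
      exact: le_trans (ler_norm _) lipt.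
    have -> : N * (L * ((SX - SY) / N)) = L * (SX - SY).
      by move: (lt0r_neq0 Np) => NZ; clearbody N; field.
    by [].
  have h' : L * (SX - SY) <= L * \sum_(j < n) d j i.
    apply: ler_wpM2l => //.
    rewrite /SX /SY !natr_sum -sumrB; apply: ler_sum => j _.
    exact: zcum_diff_le.
  lra.
lra.
Qed.

End Obj.
Arguments zbound {m n K}.
Arguments cmax {R m n}.


Section Path.
Variables (R : realType) (m n K : nat) (c : 'I_n -> 'I_m -> R) (L : R)
  (S : 'I_n -> 'I_m -> bool) (g : 'I_K -> 'I_m -> R -> R) (T : nat)
  (w : {ffun 'I_T -> 'I_n}).
Hypothesis L0 : 0 <= L.
Hypothesis Hlip : forall k i, lipschitz_on01 L (g k i).
Hypothesis Hg0 : forall k i x, 0 <= x <= 1 -> 0 <= g k i x.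
Hypothesis K0 : (0 < K)%N.
Hypothesis T0 : (0 < T)%N.
Hypothesis KT : (K %| T)%N.

Local Notation ep := (T %/ K)%N.

Lemma T_eq : T = (ep * K)%N.
Proof. by rewrite divnK. Qed.

Lemma ep0 : (0 < ep)%N.
Proof.
have HT := T_eq; case E: (T %/ K)%N HT => [|e] // HT.
by move: T0; rewrite HT.
Qed.

Lemma zb_off (X : alloc m n K) : feasible_off S ep w X -> zbound X ep.
Proof.
move=> [H1 _] k1 k1K.
apply: (@zcum_bound m n K X (fun kk j => Lambda w j (kk * ep) (kk.+1 * ep)) ep k1) => //.
move=> kk; rewrite Lambda_sumj; first by rewrite mulSn addnK.
by rewrite [Z in (_ <= Z)%N]T_eq mulnC leq_mul2l ltn_ord orbT.
Qed.

Lemma zb_proxy (X : alloc m n K) : feasible_proxy S ep w X -> zbound X ep.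
Proof.
move=> [_ H2] k1 k1K.
apply: (@zcum_bound m n K X (fun kk j => Lambda w j 0 ep) ep k1) => //.
move=> kk; rewrite Lambda_sumj ?subn0 //.
by rewrite [Z in (_ <= Z)%N]T_eq leq_pmulr.
Qed.

Definition zero_alloc : alloc m n K := fun _ _ _ => 0%N.

Lemma zero_off : feasible_off S ep w zero_alloc.
Proof. by split => [k j|j i _]; rewrite /Zcum ?big1. Qed.

Lemma zero_proxy : feasible_proxy S ep w zero_alloc.
Proof. by split => [k j i _|k j]; rewrite ?big1. Qed.

Lemma has_inf_off : has_inf [set objective c g ep X | X in feasible_off S ep w].
Proof.
split; first by exists (objective c g ep zero_alloc); exists zero_alloc => //; exact: zero_off.
exists (- (cmax c * (K * ep)%:R)) => _ [X HX <-].
by apply: obj_lb => //; [exact: ep0 | exact: zb_off].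
Qed.

Lemma lb_proxy : has_lbound [set objective c g ep X | X in feasible_proxy S ep w].
Proof.
exists (- (cmax c * (K * ep)%:R)) => _ [X HX <-].
by apply: obj_lb => //; [exact: ep0 | exact: zb_proxy].
Qed.

Definition Lam0 j := Lambda w j 0 ep.
Definition Lamk (k : 'I_K) j := Lambda w j (k * ep) (k.+1 * ep).

Lemma pathwise eps : 0 < eps ->
  Vproxy1 c S g w <= Voff c S g w + eps +
    (cmax c + K%:R * L) * \sum_(k < K) \sum_(j < n) ((Lamk k j - Lam0 j)%N)%:R.
Proof.
move=> eps0.
have [_ [X HX <-] Hlt] := inf_adherent eps0 has_inf_off.
set Y : alloc m n K := fun k j i =>
  minn (X k j i) (Lam0 j - \sum_(i' < m | (i' < i)%N) X k j i').
have YX : forall k j i, (Y k j i <= X k j i)%N by move=> k j i; rewrite geq_minl.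
have sumY : forall k j, (\sum_(i < m) Y k j i = minn (\sum_(i < m) X k j i) (Lam0 j))%N.
  by move=> k j; rewrite /Y greedy_sum.
have HY : feasible_proxy S ep w Y.
  split.
    move=> k j i nS; case: HX => _ /(_ j i nS) HZ.
    have : (X k j i <= Zcum X j i K)%N by rewrite /Zcum (bigD1 k) //= leq_addr.
    rewrite HZ leqn0 => /eqP X0.
    by apply/eqP; rewrite -leqn0 -X0 YX.
  by move=> k j; rewrite sumY geq_minr.
have le1 : Vproxy1 c S g w <= objective c g ep Y.
  by apply: (ge_inf lb_proxy); exists Y.
have le2 := @obj_diff R m n K c L g L0 Hlip X Y ep ep0 (zb_off X HX) YX.
have le3 : \sum_(j < n) \sum_(i < m) ((Zcum X j i K)%:R - (Zcum Y j i K)%:R)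
   <= \sum_(k < K) \sum_(j < n) ((Lamk k j - Lam0 j)%N)%:R :> R.
  have e : forall j i, (Zcum X j i K)%:R - (Zcum Y j i K)%:R =
     \sum_(k < K) ((X k j i)%:R - (Y k j i)%:R) :> R.
    move=> j i; rewrite /Zcum !natr_sum -sumrB.
    by apply: eq_bigl => k; rewrite ltn_ord.
  under eq_bigr do under eq_bigr do rewrite e.
  under eq_bigr do rewrite exchange_big /=.
  rewrite exchange_big /=; apply: ler_sum => k _; apply: ler_sum => j _.
  rewrite sumrB -!natr_sum sumY -natrB ?geq_minl // ler_nat.
  case: HX => /(_ k j) H _.
  rewrite /Lamk.
  set a := (\sum_(i < m) X k j i)%N in H *.
  lia.
have cL : 0 <= cmax c + K%:R * L.
  by apply: addr_ge0; [exact: cmax_ge0 | apply: mulr_ge0 => //; apply: ler0n].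
have le4 := ler_wpM2l cL le3.
rewrite /Voff.
lra.
Qed.

End Path.

Section Prob.
Variables (R : realType) (n T : nat) (p : 'I_n -> R).
Hypothesis p0 : forall j, 0 <= p j.
Hypothesis p1 : \sum_(j < n) p j = 1.

Local Notation E := (@expect R n T p).

Lemma expect_prod (phi : 'I_T -> 'I_n -> R) :
  E (fun w => \prod_(t < T) phi t (w t)) = \prod_(t < T) \sum_(x < n) p x * phi t x.
Proof.
rewrite /expect; under eq_bigr do rewrite -big_split /=.
by rewrite (bigA_distr_bigA (fun t x => p x * phi t x)).
Qed.

Lemma expect_cst a : E (fun _ => a) = a.
Proof.
have H := expect_prod (fun _ _ => 1).
have e1 : \prod_(t < T) \sum_(x < n) p x * 1 = 1.
  by rewrite big1 // => t _; under eq_bigr do rewrite mulr1.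
rewrite e1 /expect in H.
rewrite /expect -mulr_suml.
have -> : \sum_(w : {ffun 'I_T -> 'I_n}) \prod_(t < T) p (w t) = 1.
  by rewrite -[RHS]H; apply: eq_bigr => w _; rewrite prodr_const expr1n mulr1.
by rewrite mul1r.
Qed.

Lemma weight_ge0 (w : {ffun 'I_T -> 'I_n}) : 0 <= \prod_(t < T) p (w t).
Proof. by apply: prodr_ge0 => t _. Qed.

Lemma expectD f h : E (fun w => f w + h w) = E f + E h.
Proof. by rewrite /expect -big_split /=; apply: eq_bigr => w _; rewrite mulrDr. Qed.

Lemma expectZ a f : E (fun w => a * f w) = a * E f.
Proof. by rewrite /expect mulr_sumr; apply: eq_bigr => w _; rewrite mulrCA. Qed.

Lemma expect_le f h : (forall w, f w <= h w) -> E f <= E h.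
Proof.
move=> H; rewrite /expect; apply: ler_sum => w _.
by apply: ler_wpM2l; [exact: weight_ge0 | exact: H].
Qed.

Lemma expect_sum (I : finType) (F : I -> {ffun 'I_T -> 'I_n} -> R) :
  E (fun w => \sum_(i : I) F i w) = \sum_(i : I) E (F i).
Proof.
rewrite /expect; under eq_bigr do rewrite mulr_sumr.
by rewrite exchange_big.
Qed.

Lemma expect_ext f h : (forall w, f w = h w) -> E f = E h.
Proof. by move=> H; rewrite /expect; apply: eq_bigr => w _; rewrite H. Qed.

Lemma sum_p_const a : \sum_(x < n) p x * a = a.
Proof. by rewrite -mulr_suml p1 mul1r. Qed.

Lemma prod_pick (t : 'I_T) (f : 'I_n -> R) (w : {ffun 'I_T -> 'I_n}) :
  \prod_(u < T) (if u == t then f (w u) else 1) = f (w t).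
Proof.
rewrite (bigD1 t) //= eqxx big1 ?mulr1 // => u /negbTE ->.
by [].
Qed.

Lemma expect_pair (t s : 'I_T) (f h : 'I_n -> R) :
  E (fun w => f (w t) * h (w s)) =
  if t == s then \sum_(x < n) p x * (f x * h x)
  else (\sum_(x < n) p x * f x) * (\sum_(x < n) p x * h x).
Proof.
pose phi u x := (if u == t then f x else 1) * (if u == s then h x else 1).
have -> : E (fun w => f (w t) * h (w s)) = E (fun w => \prod_(u < T) phi u (w u)).
  apply: expect_ext => w; rewrite /phi big_split /=.
  by rewrite (prod_pick t f w) (prod_pick s h w).
rewrite expect_prod (bigD1 t) //=.
case: eqP => [ts|/eqP ts].
  subst s.
  rewrite [X in _ * X = _]big1 ?mulr1; last first.
    move=> u /negbTE ut; rewrite /phi ut.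
    by under eq_bigr do rewrite mulr1; rewrite sum_p_const.
  by apply: eq_bigr => x _; rewrite /phi eqxx.
rewrite (bigD1 s) /=; last by rewrite eq_sym.
rewrite [X in _ * (_ * X) = _]big1 ?mulr1; last first.
  move=> u /andP[/negbTE ut /negbTE us]; rewrite /phi ut us.
  by under eq_bigr do rewrite mulr1; rewrite sum_p_const.
congr (_ * _); apply: eq_bigr => x _; rewrite /phi eqxx.
  by rewrite (negbTE ts) mulr1.
by rewrite eq_sym (negbTE ts) mul1r.
Qed.

Lemma expect_abs_sq f : (E (fun w => `|f w|)) ^+ 2 <= E (fun w => f w ^+ 2).
Proof.
set mu := E (fun w => `|f w|).
have H : 0 <= E (fun w => (`|f w| - mu) ^+ 2).
  rewrite -(expect_cst 0); apply: expect_le => w; exact: sqr_ge0.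
have e : forall w, (`|f w| - mu) ^+ 2 = (f w ^+ 2 + (- (2 * mu)) * `|f w|) + mu ^+ 2.
  by move=> w; rewrite -(real_normK (num_real (f w))); ring.
have H2 : E (fun w => (`|f w| - mu) ^+ 2) =
    E (fun w => (f w ^+ 2 + (- (2 * mu)) * `|f w|) + mu ^+ 2) by apply: expect_ext.
rewrite H2 (expectD (fun w => f w ^+ 2 + (- (2 * mu)) * `|f w|)) in H.
rewrite (expectD (fun w => f w ^+ 2)) expectZ expect_cst -/mu in H.
lra.
Qed.


Lemma p_le1 j : p j <= 1.
Proof.
rewrite -p1 (bigD1 j) //= lerDl; by apply: sumr_ge0.
Qed.

Definition ev (j x : 'I_n) : R := (x == j)%:R - p j.

Lemma mean0 j : \sum_(x < n) p x * ev j x = 0.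
Proof.
under eq_bigr do rewrite /ev mulrBr.
rewrite sumrB sum_p_const (bigD1 j) //= eqxx mulr1 big1 ?addr0 ?subrr //.
by move=> x /negbTE ->; rewrite mulr0.
Qed.

Lemma var_le1 j : \sum_(x < n) p x * (ev j x * ev j x) <= 1.
Proof.
rewrite -[X in _ <= X]p1; apply: ler_sum => x _.
rewrite -[X in _ <= X]mulr1; apply: ler_wpM2l => //.
have h0 := p0 j; have h1 := p_le1 j.
rewrite /ev; case: (x == j) => /=; nra.
Qed.

Lemma second_moment (a : 'I_T -> R) j :
  E (fun w => (\sum_(t < T) a t * ev j (w t)) ^+ 2) <= \sum_(t < T) a t ^+ 2.
Proof.
have -> : E (fun w => (\sum_(t < T) a t * ev j (w t)) ^+ 2) =
   E (fun w => \sum_(t < T) \sum_(s < T) (a t * a s) * (ev j (w t) * ev j (w s))).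
  apply: expect_ext => w; rewrite expr2 mulr_suml; apply: eq_bigr => t _.
  rewrite mulr_sumr; apply: eq_bigr => s _; ring.
rewrite expect_sum; apply: ler_sum => t _.
rewrite (expect_sum _ (fun s w => (a t * a s) * (ev j (w t) * ev j (w s)))).
under eq_bigr do rewrite (expectZ (a t * _) (fun w => ev j (w t) * ev j (w _))) expect_pair.
rewrite (bigD1 t) //= eqxx [X in _ + X <= _]big1 ?addr0; last first.
  by move=> s; rewrite eq_sym => /negbTE ->; rewrite mean0 mulr0 mulr0.
rewrite -expr2 -[X in _ <= X]mulr1; apply: ler_wpM2l; first exact: sqr_ge0.
exact: var_le1.
Qed.

End Prob.

Lemma sqrt_bound (R : realType) (x y : R) : 0 <= x -> 0 <= y -> x ^+ 2 <= 4 * y ->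
  x <= 2 * Num.sqrt y.
Proof.
move=> x0 y0 h.
have -> : x = Num.sqrt (x ^+ 2) by rewrite sqrtr_sqr ger0_norm.
have -> : 2 * Num.sqrt y = Num.sqrt (4 * y).
  rewrite sqrtrM; last by [].
  have -> : (4 : R) = 2 ^+ 2 by rewrite expr2; lra.
  by rewrite sqrtr_sqr ger0_norm.
by rewrite ler_sqrt //; apply: mulr_ge0.
Qed.

Lemma natB_norm (R : realType) (x y : nat) : ((x - y)%N)%:R <= `|x%:R - y%:R| :> R.
Proof.
case: (leqP y x) => h.
  by rewrite natrB // ler_norm.
by rewrite (_ : (x - y)%N = 0%N) ?normr_ge0 //; apply/eqP; rewrite subn_eq0 ltnW.
Qed.

Lemma bool_sq (R : realType) (b1 b2 : bool) :
  ((b1 : nat)%:R - (b2 : nat)%:R) ^+ 2 <= (b1 : nat)%:R + (b2 : nat)%:R :> R.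
Proof. by case: b1; case: b2; rewrite /= ?mulr1n ?mulr0n expr2; lra. Qed.

Section Conc.
Variables (R : realType) (n T : nat) (p : 'I_n -> R).
Hypothesis p0 : forall j, 0 <= p j.
Hypothesis p1 : \sum_(j < n) p j = 1.
Variables (K ep : nat) (k : 'I_K) (j : 'I_n).
Hypothesis Tep : T = (ep * K)%N.

Local Notation E := (@expect R n T p).

Definition acoef (t : 'I_T) : R :=
  ((k * ep <= t < k.+1 * ep)%N : nat)%:R - ((0 <= t < ep)%N : nat)%:R.

Lemma kep_le : (k.+1 * ep <= T)%N.
Proof. by rewrite Tep mulnC leq_mul2l ltn_ord orbT. Qed.

Lemma ep_le : (ep <= T)%N.
Proof.
rewrite Tep; case: ep => // e; rewrite leq_pmulr //.
by case: K k => [[]|].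
Qed.

Lemma Lambda_R (w : {ffun 'I_T -> 'I_n}) a b :
  (Lambda w j a b)%:R = \sum_(t < T) ((a <= t < b)%N : nat)%:R * ((w t == j) : nat)%:R :> R.
Proof.
rewrite Lambda_sum natr_sum; apply: eq_bigr => t _.
by case: (a <= t < b)%N; case: (w t == j); rewrite /= ?mulr1n ?mulr0n ?mulr1 ?mul0r ?mulr0.
Qed.

Lemma sum_acoef : \sum_(t < T) acoef t = 0.
Proof.
rewrite /acoef sumrB -!natr_sum count_int ?kep_le // count_int ?ep_le //.
by rewrite mulSn addnK subn0 subrr.
Qed.

Lemma D_eq (w : {ffun 'I_T -> 'I_n}) :
  \sum_(t < T) acoef t * @ev R n p j (w t) =
  (Lambda w j (k * ep) (k.+1 * ep))%:R - (Lambda w j 0 ep)%:R.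
Proof.
rewrite !Lambda_R -sumrB /ev.
under eq_bigr do rewrite mulrBr.
rewrite [LHS]sumrB -[X in _ - X]mulr_suml sum_acoef mul0r subr0.
by apply: eq_bigr => t _; rewrite /acoef mulrBl.
Qed.

Lemma lam_diff_bound :
  E (fun w => ((Lambda w j (k * ep) (k.+1 * ep) - Lambda w j 0 ep)%N)%:R)
    <= 2 * Num.sqrt ep%:R.
Proof.
set D := fun w : {ffun 'I_T -> 'I_n} => \sum_(t < T) acoef t * @ev R n p j (w t).
apply: (@le_trans _ _ (E (fun w => `|D w|))).
  by apply: (@expect_le R n T p p0) => w; rewrite /D /= D_eq; apply: natB_norm.
apply: sqrt_bound; first by rewrite -(@expect_cst R n T p p1 0); apply: (@expect_le R n T p p0).
  exact: ler0n.
apply: le_trans (@expect_abs_sq R n T p p0 p1 D) _.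
apply: le_trans (@second_moment R n T p p0 p1 acoef j) _.
apply: (@le_trans _ _ (\sum_(t < T) (((k * ep <= t < k.+1 * ep)%N : nat)%:R
                                    + ((0 <= t < ep)%N : nat)%:R))).
  by apply: ler_sum => t _; apply: bool_sq.
rewrite big_split -!natr_sum count_int ?kep_le // count_int ?ep_le //.
rewrite /= mulSn addnK subn0 -natrD; have : 0 <= ep%:R :> R by apply: ler0n.
rewrite natrD; move=> h; lra.
Qed.

End Conc.

Theorem lemma3 (R : realType) (m n : nat) (c : 'I_n -> 'I_m -> R) (L : R)
  (p : 'I_n -> R) :
  0 <= L ->
  (forall j, 0 <= p j) -> \sum_(j < n) p j = 1 ->
  exists C : R, forall (S : 'I_n -> 'I_m -> bool) (K T : nat)
    (rho : 'I_K -> 'I_m -> R) (g : 'I_K -> 'I_m -> R -> R),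
    (0 < K)%N -> (0 < T)%N -> (K %| T)%N ->
    (forall k i, 0 <= rho k i <= 1) ->
    (forall k i, convex_on01 (g k i)) ->
    (forall k i, lipschitz_on01 L (g k i)) ->
    (forall k i x, 0 <= x <= 1 -> 0 <= g k i x) ->
    (forall k i, g k i (rho k i) = 0) ->
    expect p (Vproxy1 c S g (T:=T)) <=
      expect p (Voff c S g (T:=T))
      + C * (K%:R * Num.sqrt K%:R) * Num.sqrt T%:R.
Proof.
move=> L0 p0 p1.
exists (2 * n%:R * (cmax c + L)).
move=> S K T rho g K0 T0 KT _ _ Hlip Hg0 _.
set ep := (T %/ K)%N.
have Tep : T = (ep * K)%N by rewrite divnK.
apply/ler_addgt0Pr => eps eps0.
set B := fun w : {ffun 'I_T -> 'I_n} => \sum_(k < K) \sum_(j < n)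
   ((Lambda w j (k * ep) (k.+1 * ep) - Lambda w j 0 ep)%N)%:R : R.
have step1 : expect p (Vproxy1 c S g (T:=T)) <=
    expect p (fun w => Voff c S g w + eps + (cmax c + K%:R * L) * B w).
  apply: (@expect_le R n T p p0) => w.
  exact: (@pathwise R m n K c L S g T w L0 Hlip Hg0 K0 T0 KT eps eps0).
have step2 : expect p (fun w => Voff c S g w + eps + (cmax c + K%:R * L) * B w)
   = expect p (Voff c S g (T:=T)) + eps + (cmax c + K%:R * L) * expect p B.
  rewrite (@expectD R n T p (fun w => Voff c S g w + eps)) (@expectD R n T p) (@expectZ R n T p).
  by rewrite (@expect_cst R n T p p1).
have step3 : expect p B <= K%:R * (n%:R * (2 * Num.sqrt ep%:R)).
  rewrite /B (@expect_sum R n T p _ (fun (k : 'I_K) w => \sum_(j < n)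
      ((Lambda w j (k * ep) (k.+1 * ep) - Lambda w j 0 ep)%N)%:R)).
  apply: (@le_trans _ _ (\sum_(k < K) \sum_(j < n) (2 * Num.sqrt ep%:R))).
    apply: ler_sum => k _.
    rewrite (@expect_sum R n T p _ (fun (j : 'I_n) w =>
      ((Lambda w j (k * ep) (k.+1 * ep) - Lambda w j 0 ep)%N)%:R)).
    apply: ler_sum => j _.
    exact: (@lam_diff_bound R n T p p0 p1 K ep k j Tep).
  by rewrite !sumr_const !card_ord !mulr_natl.
have cL : 0 <= cmax c + K%:R * L.
  by apply: addr_ge0; [exact: cmax_ge0 | apply: mulr_ge0 => //; apply: ler0n].
have step3' := ler_wpM2l cL step3.
have step4 : (cmax c + K%:R * L) * (K%:R * (n%:R * (2 * Num.sqrt ep%:R)))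
    <= 2 * n%:R * (cmax c + L) * (K%:R * Num.sqrt K%:R) * Num.sqrt T%:R.
  have hK : 1 <= K%:R :> R by rewrite ler1n.
  have hc := @cmax_ge0 R m n c.
  have h0 : 0 <= cmax c * (K%:R - 1) by apply: mulr_ge0 => //; rewrite subr_ge0.
  have h : cmax c + K%:R * L <= (cmax c + L) * K%:R.
    by rewrite -subr_ge0 (_ : _ - _ = cmax c * (K%:R - 1)) //; ring.
  have s0 : 0 <= Num.sqrt ep%:R :> R by apply: sqrtr_ge0.
  have n0 : 0 <= n%:R :> R by apply: ler0n.
  apply: (@le_trans _ _ ((cmax c + L) * K%:R * (K%:R * (n%:R * (2 * Num.sqrt ep%:R))))).
    apply: ler_wpM2r => //; apply: mulr_ge0; first by apply: ler0n.
    by apply: mulr_ge0 => //; apply: mulr_ge0.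
  rewrite Tep natrM sqrtrM ?ler0n //.
  set s := Num.sqrt ep%:R; set r := Num.sqrt K%:R.
  have eK : K%:R = r * r :> R by rewrite /r -expr2 sqr_sqrtr ?ler0n.
  rewrite eK le_eqVlt; apply/orP; left; apply/eqP; ring.
lra.
Qed.
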